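(* Let $C$ be a countable torsion abelian group and $A$ a countable abelian group. For a prime $p$ let $A_p\subseteq A$ and $C_p\subseteq C$ be the $p$-primary subgroups. Then $\mathrm{PExt}(C,A)$ and $\prod_{p\text{ prime}}\mathrm{PExt}(C_p,A_p)$ are Borel-definably isomorphic.
   Context: For countable $C,A$: $\mathsf Z(C,A)$ is the Polish group (closed in $A^{C\times C}$) of normalized symmetric 2-cocycles ($c(x,0)=0$, $c(x,y)=c(y,x)$, $c(y,z)-c(x+y,z)+c(x,y+z)-c(x,y)=0$), $\mathsf B(C,A)$ the subgroup of coboundaries $c(x,y)=\phi(y)-\phi(x+y)+\phi(x)$, $\mathsf B_{\mathrm w}(C,A)$ the subgroup of cocycles whose restriction to $S\times S$ is a coboundary for every finite $S\le C$; $\mathrm{PExt}(C,A)=\mathsf B_{\mathrm w}(C,A)/\mathsf B(C,A)$, a group with a Polish cover. The product of groups with a Polish cover $\hat G_p/N_p$ is $\prod_p\hat G_p/\prod_pN_p$. A homomorphism between groups with a Polish cover $\hat G/N\to\hat H/M$ is Borel-definable if it is induced by a Borel function $\hat G\to\hat H$; a Borel-definable isomorphism is a bijective Borel-definable homomorphism. *)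

(* Defs.v *)
From HB Require Import structures.
From mathcomp Require Import all_boot all_order all_algebra.
From mathcomp Require Import boolp classical_sets measure.

Set Implicit Arguments.
Unset Strict Implicit.
Unset Printing Implicit Defensive.

Import GRing.Theory.
Local Open Scope ring_scope.
Local Open Scope classical_set_scope.

Definition torsion (C : zmodType) : Prop :=
  forall x : C, exists n : nat, (0 < n)%N /\ x *+ n = 0.

Definition primary (C : zmodType) (p : nat) : {pred C} :=
  fun x => `[< exists n : nat, x *+ (p ^ n) = 0 >].

Lemma primary_zmod_closed (C : zmodType) (p : nat) :
  zmod_closed (@primary C p).
Proof.
split.
  by rewrite /primary unfold_in; apply/asboolP; exists 0%N; rewrite mul0rn.
move=> x y; rewrite !unfold_in => /asboolP [n Hn] /asboolP [m Hm].
apply/asboolP; exists (n + m)%N.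
rewrite mulrnBl expnD mulrnA Hn mul0rn mulnC mulrnA Hm mul0rn.
by rewrite subr0.
Qed.

HB.instance Definition _ (C : zmodType) (p : nat) :=
  GRing.isZmodClosed.Build C (@primary C p) (primary_zmod_closed C p).

Definition pcomp (C : zmodType) (p : nat) := {x : C | x \in @primary C p}.
HB.instance Definition _ (C : zmodType) (p : nat) := [isSub of pcomp C p for @proj1_sig C _].
HB.instance Definition _ (C : zmodType) (p : nat) := [Choice of pcomp C p by <:].
HB.instance Definition _ (C : zmodType) (p : nat) :=
  [SubChoice_isSubZmodule of pcomp C p by <:].

Definition prime_idx := {p : nat | prime p}.

Definition cocycle (C A : zmodType) (c : C -> C -> A) : Prop :=
  [/\ forall x, c x 0 = 0,
      forall x y, c x y = c y x &
      forall x y z, c y z - c (x + y) z + c x (y + z) - c x y = 0].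

Definition Zc (C A : zmodType) : set (C -> C -> A) := [set c | cocycle c].

Definition Bc (C A : zmodType) : set (C -> C -> A) :=
  [set c | cocycle c /\
     exists phi : C -> A, forall x y, c x y = phi y - phi (x + y) + phi x].

(* finite subgroups of C, given by a finite list of their elements *)
Definition fin_subgroup (C : zmodType) (s : seq C) : Prop :=
  0 \in s /\ forall x y, x \in s -> y \in s -> x - y \in s.

Definition Bw (C A : zmodType) : set (C -> C -> A) :=
  [set c | cocycle c /\
     forall s : seq C, fin_subgroup s ->
       exists phi : C -> A, forall x y, x \in s -> y \in s ->
         c x y = phi y - phi (x + y) + phi x].

(* A^(C x C) carries the product of the discrete
   topologies; for countable C, A its Borel sigma-algebra is generated by
   the (clopen) cylinders {c | c x y = a}.  Same for the product space. *)

Definition cyl (C A : Type) : set (set (C -> C -> A)) :=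
  [set B | exists x y a, B = [set c | c x y = a]].

Definition borel1 (C A : Type) : set (set (C -> C -> A)) := <<s @cyl C A >>.

Definition prodspace (C A : zmodType) :=
  forall q : prime_idx, pcomp C (val q) -> pcomp C (val q) -> pcomp A (val q).

Definition cylP (C A : zmodType) : set (set (prodspace C A)) :=
  [set B | exists (q : prime_idx) (x y : pcomp C (val q)) (a : pcomp A (val q)),
             B = [set F | F q x y = a]].

Definition borelP (C A : zmodType) : set (set (prodspace C A)) := <<s @cylP C A >>.

Definition addP (C A : zmodType) (F G : prodspace C A) : prodspace C A :=
  fun q x y => F q x y + G q x y.
Definition subP (C A : zmodType) (F G : prodspace C A) : prodspace C A :=
  fun q x y => F q x y - G q x y.

(* product of the groups with a Polish cover PExt(C_p,A_p) = Bw/B :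
   prod_p Bw(C_p,A_p) / prod_p B(C_p,A_p) *)
Definition prodBw (C A : zmodType) : set (prodspace C A) :=
  [set F | forall q, Bw (F q)].
Definition prodBc (C A : zmodType) : set (prodspace C A) :=
  [set F | forall q, Bc (F q)].

(* Borel-definable isomorphism Ghat/N -> Hhat/M between groups with a
   Polish cover: a bijective group homomorphism induced by a Borel
   function f : Ghat -> Hhat (Borel w.r.t. the subspace sigma-algebras).
   The quotient map is written out: [x] |-> [f x]. *)
Definition borel_def_iso (X Y : Type)
    (addX subX : X -> X -> X) (addY subY : Y -> Y -> Y)
    (BX : set (set X)) (BY : set (set Y))
    (Ghat N : set X) (Hhat M : set Y) : Prop :=
  exists f : X -> Y,
    [/\
        forall x, Ghat x -> Hhat (f x),
        forall B, BY B -> exists B', BX B' /\ Ghat `&` (f @^-1` B) = Ghat `&` B',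
        forall x y, Ghat x -> Ghat y -> N (subX x y) -> M (subY (f x) (f y)),
        forall x y, Ghat x -> Ghat y ->
          M (subY (f (addX x y)) (addY (f x) (f y))) &
        (forall x y, Ghat x -> Ghat y -> M (subY (f x) (f y)) -> N (subX x y)) /\
        (forall z, Hhat z -> exists2 x, Ghat x & M (subY z (f x)))].

Definition add1 (C A : zmodType) (c d : C -> C -> A) : C -> C -> A :=
  fun x y => c x y + d x y.
Definition sub1 (C A : zmodType) (c d : C -> C -> A) : C -> C -> A :=
  fun x y => c x y - d x y.

(* Main.v *)
Require Import Defs.
From HB Require Import structures.
From mathcomp Require Import all_boot all_algebra.
From mathcomp Require Import boolp classical_sets measure zify.
Set Implicit Arguments.
Unset Strict Implicit.
Unset Printing Implicit Defensive.
Import GRing.Theory.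
Local Open Scope ring_scope.
Local Open Scope classical_set_scope.

Lemma cocycle_sym (C A : zmodType) (e : C -> C -> A) : cocycle e -> forall x y, e x y = e y x.
Proof. by case. Qed.
Lemma cocycle_0r (C A : zmodType) (e : C -> C -> A) : cocycle e -> forall x, e x 0 = 0.
Proof. by case. Qed.
Lemma cocycle_0l (C A : zmodType) (e : C -> C -> A) : cocycle e -> forall x, e 0 x = 0.
Proof. by case=> h0 hs _ x; rewrite hs h0. Qed.
Lemma cocycle_id (C A : zmodType) (e : C -> C -> A) : cocycle e ->
  forall x y z, e y z + e x (y + z) = e x y + e (x + y) z.
Proof.
case=> _ _ h x y z; move: (h x y z); move/eqP; rewrite subr_eq0 => /eqP <-.
by rewrite addrAC subrK.
Qed.

Definition ext (C A : zmodType) (e : C -> C -> A) (he : cocycle e) := (A * C)%type.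
HB.instance Definition _ (C A : zmodType) (e : C -> C -> A) (he : cocycle e) :=
  Choice.on (ext he).

Definition ext_add (C A : zmodType) (e : C -> C -> A) (he : cocycle e) (u v : ext he) : ext he :=
  (u.1 + v.1 + e u.2 v.2, u.2 + v.2).
Definition ext_opp (C A : zmodType) (e : C -> C -> A) (he : cocycle e) (u : ext he) : ext he :=
  (- u.1 - e u.2 (- u.2), - u.2).
Definition ext_zero (C A : zmodType) (e : C -> C -> A) (he : cocycle e) : ext he := (0, 0).

Lemma ext_addA (C A : zmodType) (e : C -> C -> A) (he : cocycle e) : associative (@ext_add C A e he).
Proof.
move=> [a u] [b v] [c w]; rewrite /ext_add /=; congr (_, _); last by rewrite addrA.
rewrite -!addrA; congr (_ + _); rewrite [c + _]addrC -!addrA; congr (_ + _).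
by rewrite addrA (cocycle_id he) -addrA [c + _]addrC.
Qed.
Lemma ext_addC (C A : zmodType) (e : C -> C -> A) (he : cocycle e) : commutative (@ext_add C A e he).
Proof.
move=> [a u] [b v]; rewrite /ext_add /= (cocycle_sym he u v) [a + b]addrC [u + v]addrC //.
Qed.
Lemma ext_add0 (C A : zmodType) (e : C -> C -> A) (he : cocycle e) : left_id (ext_zero he) (@ext_add C A e he).
Proof. by move=> [a u]; rewrite /ext_add /= (cocycle_0l he) !add0r addr0. Qed.
Lemma ext_addN (C A : zmodType) (e : C -> C -> A) (he : cocycle e) : left_inverse (ext_zero he) (@ext_opp C A e he) (@ext_add C A e he).
Proof.
move=> [a u]; rewrite /ext_add /ext_opp /ext_zero /= (cocycle_sym he (-u) u).
by rewrite addrAC subrK addNr addNr.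
Qed.

HB.instance Definition _ (C A : zmodType) (e : C -> C -> A) (he : cocycle e) :=
  GRing.isZmodule.Build (ext he) (@ext_addA C A e he) (@ext_addC C A e he)
    (@ext_add0 C A e he) (@ext_addN C A e he).

Lemma ext_addE (C A : zmodType) (e : C -> C -> A) (he : cocycle e) (u v : ext he) :
  u + v = (u.1 + v.1 + e u.2 v.2, u.2 + v.2).
Proof. by []. Qed.
Lemma ext_zeroE (C A : zmodType) (e : C -> C -> A) (he : cocycle e) : (0 : ext he) = (0, 0).
Proof. by []. Qed.

Lemma primaryP (C : zmodType) (p : nat) (x : C) :
  reflect (exists n, x *+ (p ^ n) = 0) (x \in primary p).
Proof. by rewrite unfold_in; apply: asboolP. Qed.

Lemma primary_mul (C : zmodType) (p k : nat) (x : C) :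
  x *+ (p ^ k) \in primary p -> x \in primary p.
Proof.
move/primaryP=> [n hn]; apply/primaryP; exists (k + n)%N.
by rewrite expnD mulrnA.
Qed.

Definition copr (C : zmodType) (p : nat) (x : C) : Prop :=
  exists m, [/\ (0 < m)%N, coprime m p & x *+ m = 0].

Lemma kill_gcd (C : zmodType) (x : C) n m :
  (0 < n)%N -> x *+ n = 0 -> x *+ m = 0 -> x *+ gcdn n m = 0.
Proof.
move=> hn hxn hxm; case: (egcdnP m hn) => km kn hE _.
have : x *+ (km * n) = x *+ (kn * m + gcdn n m) by rewrite hE.
by rewrite mulrnDr [(km * n)%N]mulnC [(kn * m)%N]mulnC !mulrnA hxn hxm !mul0rn add0r => <-.
Qed.

Lemma inter0 (C : zmodType) (p : nat) (x : C) :
  prime p -> x \in primary p -> copr p x -> x = 0.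
Proof.
move=> pp /primaryP [k hk] [m [m0 cmp hm]].
have : x *+ gcdn (p ^ k) m = 0 by apply: kill_gcd => //; rewrite expn_gt0 prime_gt0.
by rewrite (eqP (_ : coprime (p ^ k) m)) // coprime_sym coprimeXr.
Qed.

Lemma copr0 (C : zmodType) p : copr p (0 : C).
Proof. by exists 1%N; rewrite coprime1n mul0rn. Qed.

Lemma coprD (C : zmodType) p (x y : C) : copr p x -> copr p y -> copr p (x + y).
Proof.
move=> [m [m0 cm hm]] [n [n0 cn hn]]; exists (m * n)%N; split.
- by rewrite muln_gt0 m0.
- by rewrite coprimeMl cm.
- by rewrite mulrnDl mulrnA hm mul0rn mulnC mulrnA hn mul0rn addr0.
Qed.

Lemma coprN (C : zmodType) p (x : C) : copr p x -> copr p (- x).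
Proof. by move=> [m [m0 cm hm]]; exists m; rewrite mulNrn hm oppr0. Qed.

Lemma coprB (C : zmodType) p (x y : C) : copr p x -> copr p y -> copr p (x - y).
Proof. by move=> hx hy; apply: coprD => //; apply: coprN. Qed.

Lemma pi_exists (C : zmodType) (p : nat) (x : C) n :
  prime p -> (0 < n)%N -> x *+ n = 0 ->
  exists y, y \in primary p /\ copr p (x - y).
Proof.
move=> pp n0 hn; case: (pfactor_coprime pp n0) => m cpm hnm.
have m0 : (0 < m)%N by move: n0; rewrite hnm muln_gt0 => /andP[].
have cmp : coprime m (p ^ logn p n) by rewrite coprimeXr // coprime_sym.
case: (egcdnP (p ^ logn p n) m0) => km kn hE _.
move: hE; rewrite (eqP cmp) => hE.
exists (x *+ (km * m)); split.
  apply/primaryP; exists (logn p n); by rewrite -mulrnA -mulnA -hnm mulnC mulrnA hn mul0rn.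
exists m; split => //; first by rewrite coprime_sym.
rewrite mulrnBl -mulrnA (_ : (km * m * m = kn * n + m)%N); last first.
  by rewrite hE mulnDl mul1n -mulnA [(_ ^ _ * m)%N]mulnC -hnm.
by rewrite mulrnDr [(kn * n)%N]mulnC mulrnA hn mul0rn add0r subrr.
Qed.

Definition piv (C : zmodType) (p : nat) (x : C) : C :=
  xget 0 [set y | y \in primary p /\ copr p (x - y)].

Definition nb (C : zmodType) (x : C) : nat := xget 1%N [set n | (0 < n)%N /\ x *+ n = 0].

Lemma nbP (C : zmodType) (HC : torsion C) (x : C) : (0 < nb x)%N /\ x *+ nb x = 0.
Proof.
rewrite /nb; set P := [set n | _].
have : P (xget 1%N P) by apply: xgetPex; case: (HC x) => n hn; exists n.
by [].
Qed.

Lemma piv_spec (C : zmodType) (HC : torsion C) p (x : C) : prime p ->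
  piv p x \in primary p /\ copr p (x - piv p x).
Proof.
move=> pp; rewrite /piv; set P := [set y | _].
suff : P (xget 0 P) by [].
apply: xgetPex; case: (nbP HC x) => h0 h1.
by case: (pi_exists pp h0 h1) => y hy; exists y.
Qed.

Lemma piv_uniq (C : zmodType) (HC : torsion C) p (x y : C) : prime p ->
  y \in primary p -> copr p (x - y) -> piv p x = y.
Proof.
move=> pp hy hc; case: (piv_spec HC x pp) => h1 h2.
apply/eqP; rewrite -subr_eq0; apply/eqP; apply: (inter0 pp).
  by rewrite rpredB.
have -> : piv p x - y = (x - y) - (x - piv p x) by rewrite opprB [X in _ = X]addrC subrKA.
exact: coprB.
Qed.

Lemma piv_add (C : zmodType) (HC : torsion C) p (x y : C) : prime p ->
  piv p (x + y) = piv p x + piv p y.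
Proof.
move=> pp; case: (piv_spec HC x pp) => h1 h2; case: (piv_spec HC y pp) => h3 h4.
apply: piv_uniq => //; first by rewrite rpredD.
have -> : x + y - (piv p x + piv p y) = (x - piv p x) + (y - piv p y).
  by rewrite opprD addrACA.
exact: coprD.
Qed.

Lemma piv0 (C : zmodType) (HC : torsion C) p : prime p -> piv p (0 : C) = 0.
Proof. by move=> pp; apply: piv_uniq => //; [exact: rpred0 | rewrite subrr; exact: copr0]. Qed.

Lemma pivN (C : zmodType) (HC : torsion C) p (x : C) : prime p -> piv p (- x) = - piv p x.
Proof.
move=> pp; apply/eqP; rewrite -subr_eq0 opprK -piv_add // addNr piv0 //.
Qed.

Lemma pivB (C : zmodType) (HC : torsion C) p (x y : C) : prime p ->
  piv p (x - y) = piv p x - piv p y.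
Proof. by move=> pp; rewrite piv_add // pivN. Qed.

Lemma piv_id (C : zmodType) (HC : torsion C) p (x : C) : prime p ->
  x \in primary p -> piv p x = x.
Proof. by move=> pp hx; apply: piv_uniq => //; rewrite subrr; exact: copr0. Qed.

Lemma piv_copr (C : zmodType) (HC : torsion C) p (x : C) : prime p ->
  copr p x -> piv p x = 0.
Proof. by move=> pp hx; apply: piv_uniq => //; [exact: rpred0 | rewrite subr0]. Qed.

Lemma piv_big (C : zmodType) (HC : torsion C) p (x : C) n : prime p ->
  (0 < n)%N -> x *+ n = 0 -> (n < p)%N -> piv p x = 0.
Proof.
move=> pp n0 hn np; apply: piv_copr => //; exists n; split => //.
rewrite coprime_sym prime_coprime //; apply/negP => /dvdn_leq => /(_ n0).
by rewrite leqNgt np.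
Qed.

Lemma piv_other (C : zmodType) (HC : torsion C) p r (x : C) : prime p -> prime r ->
  p != r -> x \in primary r -> piv p x = 0.
Proof.
move=> pp pr npr /primaryP [k hk]; apply: piv_copr => //; exists (r ^ k)%N; split => //.
- by rewrite expn_gt0 prime_gt0.
- rewrite coprimeXl // prime_coprime // dvdn_prime2 //; by rewrite eq_sym.
Qed.

Lemma piv_primary (C : zmodType) (HC : torsion C) p (x : C) : prime p -> piv p x \in primary p.
Proof. by move=> pp; case: (piv_spec HC x pp). Qed.

Lemma sum_stab (V : zmodType) (g : nat -> V) m M : (m <= M)%N ->
  (forall p, (m <= p)%N -> g p = 0) ->
  \sum_(0 <= p < M) g p = \sum_(0 <= p < m) g p.
Proof.
move=> hmM h; rewrite (big_cat_nat (leq0n m) hmM) /= [X in _ + X]big_nat_cond [X in _ + X]big1 ?addr0 //.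
by move=> i /andP[/andP[hi _] _]; apply: h.
Qed.

Lemma sum_single (V : zmodType) (a : V) p M :
  \sum_(0 <= r < M) (if r == p then a else 0) = if (p < M)%N then a else 0.
Proof.
elim: M => [|M IH]; first by rewrite big_geq.
rewrite big_nat_recr //= IH.
case: (ltngtP p M) => h.
- by rewrite addr0 ltnS (ltnW h).
- by rewrite addr0 ltnS leqNgt h.
- by rewrite h ltnSn add0r.
Qed.

Lemma allcopr0 (C : zmodType) (y : C) n :
  (forall p, prime p -> copr p y) -> (0 < n)%N -> y *+ n = 0 -> y = 0.
Proof.
move=> hc; elim: n {-2}n (leqnn n) => [|N IH] n hn n0 hy.
  by move: hn n0; rewrite leqn0 => /eqP ->.
case: (ltngtP n 1) => h1.
- by move: n0; rewrite ltnNge -ltnS h1.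
- have pp := pdiv_prime h1.
  case: (hc _ pp) => m [m0 cm hm].
  have hg := kill_gcd n0 hy hm.
  apply: (IH (gcdn n m)) => //; last by rewrite gcdn_gt0 n0.
  have : (gcdn n m <= n)%N by apply: dvdn_leq => //; exact: dvdn_gcdl.
  rewrite leq_eqVlt => /orP [/eqP hgn|]; last by move=> h; rewrite -ltnS (leq_trans h).
  have hd : (pdiv n %| m)%N.
    by apply: (dvdn_trans (pdiv_dvd n)); rewrite -[X in (X %| _)%N]hgn dvdn_gcdr.
  by move: cm; rewrite coprime_sym prime_coprime // hd.
- by move: hy; rewrite h1.
Qed.

Lemma piv_sum (C : zmodType) (HC : torsion C) p (I : Type) (r : seq I) (P : pred I) (F : I -> C) :
  prime p -> piv p (\sum_(i <- r | P i) F i) = \sum_(i <- r | P i) piv p (F i).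
Proof.
move=> pp; exact: (big_morph (piv p) (fun a b => piv_add HC a b pp) (piv0 HC pp)).
Qed.

Lemma piv_piv (C : zmodType) (HC : torsion C) p r (x : C) : prime p ->
  piv p (if prime r then piv r x else 0) = if r == p then piv p x else 0.
Proof.
move=> pp; case: (boolP (prime r)) => pr.
  case: (eqVneq r p) => [->|hne]; first by apply: piv_id => //; apply: piv_primary.
  apply: (piv_other HC pp pr); [by rewrite eq_sym | by apply: piv_primary].
rewrite piv0 //; case: (eqVneq r p) => // hrp; by move: pr; rewrite hrp pp.
Qed.

Lemma decomp (C : zmodType) (HC : torsion C) (x : C) M : (nb x < M)%N ->
  x = \sum_(0 <= p < M) (if prime p then piv p x else 0).
Proof.
move=> hM; apply/eqP; rewrite -subr_eq0; apply/eqP.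
set y := (X in X = 0).
case: (nbP HC y) => hy0 hy1.
apply: (allcopr0 _ hy0 hy1) => p pp.
have hpy : piv p y = 0.
  rewrite /y pivB // piv_sum // (eq_bigr _ (fun r _ => piv_piv HC r x pp)) sum_single.
  case: ifP => hpM; first by rewrite subrr.
  rewrite subr0 (piv_big HC pp (proj1 (nbP HC x)) (proj2 (nbP HC x))) //.
  by rewrite (leq_trans hM) // leqNgt hpM.
by case: (piv_spec HC y pp); rewrite hpy subr0.
Qed.

Lemma ext_snd_sum (C A : zmodType) (e : C -> C -> A) (he : cocycle e) (I : Type) (r : seq I)
  (P : pred I) (F : I -> ext he) :
  (\sum_(i <- r | P i) F i).2 = \sum_(i <- r | P i) (F i).2.
Proof. by apply: (big_morph (fun u : ext he => u.2)) => //. Qed.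

Lemma glue (C A : zmodType) (HC : torsion C) (e : C -> C -> A) (he : cocycle e)
  (chi : nat -> C -> A)
  (hchi : forall p, prime p -> forall x y, x \in primary p -> y \in primary p ->
     e x y = chi p y - chi p (x + y) + chi p x) :
  exists phi : C -> A, forall x y, e x y = phi y - phi (x + y) + phi x.
Proof.
have chi0 : forall p, prime p -> chi p 0 = 0.
  move=> p pp; have := hchi p pp 0 0 (rpred0 _) (rpred0 _).
  by rewrite (cocycle_0r he) addr0 subrr add0r => <-.
pose sg (x : C) (p : nat) : ext he :=
  if prime p then (- chi p (piv p x), piv p x) else 0.
pose s (x : C) := \sum_(0 <= p < (nb x).+1) sg x p.
have sM : forall x M, (nb x < M)%N -> s x = \sum_(0 <= p < M) sg x p.
  move=> x M hM; rewrite /s [RHS](sum_stab (m := (nb x).+1)) // => p hp.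
  rewrite /sg; case: ifP => pp //.
  rewrite (piv_big HC pp (proj1 (nbP HC x)) (proj2 (nbP HC x))) // chi0 // oppr0.
  by [].
have s2 : forall x, (s x).2 = x.
  move=> x; rewrite /s ext_snd_sum [RHS](decomp HC (M := (nb x).+1)) //.
  by apply: eq_bigr => p _; rewrite /sg; case: ifP.
have sD : forall x y, s (x + y) = s x + s y.
  move=> x y; pose M := (nb x + nb y + nb (x + y)).+1.
  rewrite (sM x M) ?(sM y M) ?(sM (x + y) M) -?big_split /=; try (rewrite /M; lia).
  apply: eq_bigr => p _; rewrite /sg; case: ifP => pp; last by rewrite addr0.
  rewrite ext_addE /= piv_add //; congr (_, _).
  rewrite (hchi p pp) ?piv_primary //.
  set a := chi p (piv p x); set b := chi p (piv p y); set c := chi p (_ + _).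
  by rewrite [b - c + a]addrC addrACA addNr addKr add0r.
exists (fun x => - (s x).1) => x y.
rewrite sD ext_addE /= !s2.
set a := (s x).1; set b := (s y).1; set z := e x y.
by rewrite opprK [a + b]addrC -[b + a + z]addrA addKr [a + z]addrC addrK.
Qed.

Ltac zfin := rewrite ?subrr ?addNr ?addr0 ?add0r //.
Ltac zprep := apply/eqP; rewrite -subr_eq0; apply/eqP; rewrite ?opprD ?opprK ?addrA.

Lemma delta_add (V : zmodType) (a b c a' b' c' : V) :
  (a - b + c) + (a' - b' + c') = (a + a') - (b + b') + (c + c').
Proof. zprep; rewrite (ACl ((1*7)*(2*9)*(3*11)*(4*8)*(5*10)*(6*12))) /=; zfin. Qed.

Lemma cocycle_delta (C A : zmodType) (psi : C -> A) : psi 0 = 0 ->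
  cocycle (fun x y => psi y - psi (x + y) + psi x).
Proof.
move=> h0; split.
- by move=> x; rewrite addr0 h0 sub0r addNr.
- by move=> x y; rewrite [y + x]addrC; zprep; rewrite (ACl ((1*6)*(2*5)*(3*4))) /=; zfin.
- move=> x y z; zprep; rewrite subr0 (ACl ((1*4)*(2*7)*(3*10)*(5*8)*(6*11)*(9*12))) /=; zfin.
Qed.

Lemma quad_add (V : zmodType) (a b c e a' b' c' e' : V) :
  (a + a') - (b + b') + (c + c') - (e + e') = (a - b + c - e) + (a' - b' + c' - e').
Proof. zprep; rewrite (ACl ((1*9)*(2*13)*(3*10)*(4*14)*(5*11)*(6*15)*(7*12)*(8*16))) /=; zfin. Qed.

Lemma cocycle_add (C A : zmodType) (c d : C -> C -> A) :
  cocycle c -> cocycle d -> cocycle (fun x y => c x y + d x y).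
Proof.
move=> [c0 cs cc] [d0 ds dc]; split.
- by move=> x; rewrite c0 d0 addr0.
- by move=> x y; rewrite cs ds.
- by move=> x y z; rewrite quad_add cc dc addr0.
Qed.

Lemma fs0 (C : zmodType) (s : seq C) : fin_subgroup s -> 0 \in s.
Proof. by case. Qed.
Lemma fsB (C : zmodType) (s : seq C) x y : fin_subgroup s -> x \in s -> y \in s -> x - y \in s.
Proof. by case=> _ h; apply: h. Qed.
Lemma fsN (C : zmodType) (s : seq C) x : fin_subgroup s -> x \in s -> - x \in s.
Proof. by move=> hs hx; rewrite -sub0r fsB // fs0. Qed.
Lemma fsD (C : zmodType) (s : seq C) x y : fin_subgroup s -> x \in s -> y \in s -> x + y \in s.
Proof. by move=> hs hx hy; rewrite -[y]opprK fsB // fsN. Qed.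
Lemma fsMn (C : zmodType) (s : seq C) x i : fin_subgroup s -> x \in s -> x *+ i \in s.
Proof. by move=> hs hx; elim: i => [|i IH]; [rewrite mulr0n fs0 | rewrite mulrSr fsD]. Qed.

Lemma mulrn_mod (C : zmodType) (x : C) m k : x *+ m = 0 -> x *+ k = x *+ (k %% m).
Proof.
by move=> hm; rewrite {1}(divn_eq k m) mulrnDr mulnC mulrnA hm mul0rn add0r.
Qed.

Lemma fin_gen (C : zmodType) (s : seq C) x m : fin_subgroup s -> (0 < m)%N -> x *+ m = 0 ->
  exists s' : seq C, [/\ fin_subgroup s', {subset s <= s'}, x \in s' &
    forall w, w \in s' -> exists2 u, u \in s & exists i, w = u + x *+ i].
Proof.
move=> hs m0 hm; exists [seq u + x *+ i | u <- s, i <- iota 0 m]; split.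
- split.
    by apply/allpairsP; exists (0, 0%N); rewrite /= fs0 // mem_iota m0 mulr0n addr0.
  move=> w1 w2 /allpairsP [[u i] [/= hu hi ->]] /allpairsP [[v j] [/= hv hj ->]].
  apply/allpairsP; exists (u - v, ((i + (m - j)) %% m)%N); split => /=.
  + exact: fsB.
  + by rewrite mem_iota /= ltn_pmod.
  rewrite -mulrn_mod // mulrnDr.
  move: hj; rewrite mem_iota /= => hj.
  have hmj : x *+ (m - j) = - (x *+ j).
    by apply/eqP; rewrite -subr_eq0 opprK -mulrnDr subnK ?hm // ltnW.
  rewrite hmj; zprep; rewrite (ACl ((1*5)*(2*7)*(3*6)*(4*8))) /=; zfin.
- move=> u hu; apply/allpairsP; exists (u, 0%N); by rewrite /= hu mem_iota m0 mulr0n addr0.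
- apply/allpairsP; exists (0, (1 %% m)%N); rewrite /= fs0 // mem_iota ltn_pmod //.
  by rewrite -mulrn_mod // add0r.
- move=> w /allpairsP [[u i] [/= hu hi ->]]; exists u => //; by exists i.
Qed.

Definition kq (C : zmodType) (p : nat) (z : C) : nat := xget 0%N [set k | z *+ (p ^ k) = 0].
Definition nq (C : zmodType) (p : nat) (z : C) : nat := (p ^ kq p z)%N.

Lemma nqP (C : zmodType) p (z : C) : z \in primary p -> z *+ nq p z = 0.
Proof.
move/primaryP=> h; rewrite /nq /kq; set P := [set k | _].
have : P (xget 0%N P) by apply: xgetPex.
by [].
Qed.

Lemma nq_gt0 (C : zmodType) p (z : C) : prime p -> (0 < nq p z)%N.
Proof. by move=> pp; rewrite /nq expn_gt0 prime_gt0. Qed.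

Lemma fin0 (C : zmodType) : fin_subgroup [:: (0 : C)].
Proof.
split; first by rewrite inE.
by move=> x y; rewrite !inE => /eqP -> /eqP ->; rewrite subrr.
Qed.

Lemma gen2 (C : zmodType) p (x y : C) : prime p -> x \in primary p -> y \in primary p ->
  exists s : seq C, [/\ fin_subgroup s, x \in s, y \in s & forall w, w \in s -> w \in primary p].
Proof.
move=> pp hx hy.
case: (fin_gen (fin0 C) (nq_gt0 x pp) (nqP hx)) => s1 [hs1 sub1 xs1 el1].
case: (fin_gen hs1 (nq_gt0 y pp) (nqP hy)) => s2 [hs2 sub2 ys2 el2].
exists s2; split => //; first exact: sub2.
move=> w /el2 [u /el1 [v] hv [i ->] [j ->]].
move: hv; rewrite inE => /eqP ->.
by rewrite add0r rpredD // rpredMn.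
Qed.

Lemma tel (C A : zmodType) (c : C -> C -> A) (phi : C -> A) (z : C) n :
  (forall i, (i < n)%N -> c (z *+ i) z = phi z - phi (z *+ i + z) + phi (z *+ i)) ->
  \sum_(0 <= i < n) c (z *+ i) z = phi z *+ n - phi (z *+ n) + phi 0.
Proof.
elim: n => [|n IH] h.
  by rewrite big_geq // mulr0n mulr0n sub0r addNr.
rewrite big_nat_recr //= IH; last by move=> i hi; apply: h; rewrite ltnS ltnW.
rewrite h // (mulrSr (phi z)) -(mulrSr z).
by zprep; rewrite (ACl ((1*7)*(2*6)*(3*10)*(4*8)*(5*9))) /=; zfin.
Qed.

Lemma bw_phi0 (C A : zmodType) (c : C -> C -> A) (s : seq C) (phi : C -> A) :
  cocycle c -> fin_subgroup s ->
  (forall x y, x \in s -> y \in s -> c x y = phi y - phi (x + y) + phi x) -> phi 0 = 0.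
Proof.
move=> hc hs h; have := h 0 0 (fs0 hs) (fs0 hs).
by rewrite (cocycle_0r hc) add0r subrr add0r => <-.
Qed.

Lemma T_eq (C A : zmodType) (c : C -> C -> A) (s : seq C) (phi : C -> A) z n :
  cocycle c -> fin_subgroup s ->
  (forall x y, x \in s -> y \in s -> c x y = phi y - phi (x + y) + phi x) ->
  z \in s -> z *+ n = 0 -> \sum_(0 <= i < n) c (z *+ i) z = phi z *+ n.
Proof.
move=> hc hs h hz hn; rewrite (tel (phi := phi)) ?hn ?(bw_phi0 hc hs h) ?subr0 ?addr0 //.
by move=> i _; apply: h => //; apply: fsMn.
Qed.

Definition Tsum (C A : zmodType) (c : C -> C -> A) p (z : C) : A :=
  \sum_(0 <= i < nq p z) c (z *+ i) z.
Definition Gdiv (C A : zmodType) p (z : C) (t : A) : A :=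
  xget 0 [set a | a *+ nq p z + t = 0].
Definition psi (C A : zmodType) (c : C -> C -> A) p (z : C) : A :=
  if z == 0 then 0 else Gdiv p z (Tsum c p z).
Definition cp (C A : zmodType) (c : C -> C -> A) p (x y : C) : A :=
  c x y + (psi c p y - psi c p (x + y) + psi c p x).

Lemma psi0 (C A : zmodType) (c : C -> C -> A) p : psi c p 0 = 0.
Proof. by rewrite /psi eqxx. Qed.

Lemma BwP (C A : zmodType) (c : C -> C -> A) : Bw c ->
  cocycle c /\ forall s : seq C, fin_subgroup s ->
       exists phi : C -> A, forall x y, x \in s -> y \in s ->
         c x y = phi y - phi (x + y) + phi x.
Proof. by []. Qed.

Lemma psi_spec (C A : zmodType) (c : C -> C -> A) p z : Bw c -> prime p ->
  z \in primary p -> psi c p z *+ nq p z + Tsum c p z = 0.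
Proof.
move=> /BwP [hc hw] pp hz; case: (eqVneq z 0) => [->|hz0].
  rewrite psi0 mul0rn add0r /Tsum big1 // => i _; exact: (cocycle_0r hc).
rewrite /psi (negbTE hz0) /Gdiv; set P := [set a | _].
suff : P (xget 0 P) by [].
apply: xgetPex.
case: (gen2 pp hz hz) => s [hs zs _ _]; case: (hw s hs) => phi hphi.
exists (- phi z); rewrite /P /= /Tsum (T_eq hc hs hphi zs (nqP hz)).
by rewrite mulNrn addNr.
Qed.

Lemma key (C A : zmodType) (c : C -> C -> A) p (s : seq C) (phi : C -> A) z :
  Bw c -> prime p -> fin_subgroup s -> (forall w, w \in s -> w \in primary p) ->
  (forall x y, x \in s -> y \in s -> c x y = phi y - phi (x + y) + phi x) ->
  z \in s -> phi z + psi c p z \in primary p.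
Proof.
move=> hB pp hs hsp hphi zs; have hz := hsp z zs.
apply/primaryP; exists (kq p z); rewrite -/(nq p z) mulrnDl.
have := psi_spec hB pp hz; rewrite /Tsum (T_eq (proj1 (BwP hB)) hs hphi zs (nqP hz)).
by rewrite addrC.
Qed.

Lemma cp_primary (C A : zmodType) (c : C -> C -> A) p (x y : C) :
  Bw c -> prime p -> x \in primary p -> y \in primary p -> cp c p x y \in primary p.
Proof.
move=> hB pp hx hy; case: (gen2 pp hx hy) => s [hs xs ys hsp].
case: (proj2 (BwP hB) s hs) => phi hphi.
rewrite /cp hphi // delta_add.
by rewrite rpredD ?rpredB ?(key hB pp hs hsp hphi) // fsD.
Qed.

Lemma cp_cocycle (C A : zmodType) (c : C -> C -> A) p : cocycle c -> cocycle (cp c p).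
Proof.
move=> hc; apply: (cocycle_add hc); apply: cocycle_delta; exact: psi0.
Qed.

Lemma LBcq (C A : zmodType) p (h : Defs.pcomp C p -> Defs.pcomp C p -> Defs.pcomp A p)
  (chi : C -> A) :
  (forall z : Defs.pcomp C p, chi (val z) \in primary p) -> chi 0 = 0 ->
  (forall x y, val (h x y) = chi (val y) - chi (val x + val y) + chi (val x)) ->
  Bc h.
Proof.
move=> hp h0 hh.
pose phi (z : Defs.pcomp C p) : Defs.pcomp A p := insubd 0 (chi (val z)).
have vphi : forall z, val (phi z) = chi (val z) by move=> z; rewrite /phi insubdK.
have he : h = fun x y => phi y - phi (x + y) + phi x.
  apply: funext => x; apply: funext => y; apply: val_inj.
  by rewrite hh /= !vphi.
split; last by exists phi; rewrite he.
rewrite he; apply: cocycle_delta; apply: val_inj; by rewrite vphi /= h0.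
Qed.

Lemma LBwq (C A : zmodType) p (h : Defs.pcomp C p -> Defs.pcomp C p -> Defs.pcomp A p)
  (g : C -> C -> A) :
  (forall x y, val (h x y) = g (val x) (val y)) -> cocycle g ->
  (forall s : seq (Defs.pcomp C p), fin_subgroup s -> exists chi : C -> A,
     (forall z, z \in s -> chi (val z) \in primary p) /\
     forall x y, x \in s -> y \in s ->
       g (val x) (val y) = chi (val y) - chi (val x + val y) + chi (val x)) ->
  Bw h.
Proof.
move=> hh [g0 gs gc] hw; split.
  split.
  - by move=> x; apply: val_inj; rewrite hh /= g0.
  - by move=> x y; apply: val_inj; rewrite !hh gs.
  - by move=> x y z; apply: val_inj; rewrite /= !hh /= gc.
move=> s hs; case: (hw s hs) => chi [hp hc].
exists (fun z => insubd 0 (chi (val z))) => x y xs ys.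
apply: val_inj; rewrite hh hc //= !insubdK //; try exact: hp.
by have := hp (x + y) (fsD hs xs ys).
Qed.

Definition fmap (C A : zmodType) (c : C -> C -> A) : prodspace C A :=
  fun q x y => insubd 0 (cp c (val q) (val x) (val y)).
Arguments fmap {C A} c q x y.

Lemma val_fmap (C A : zmodType) (c : C -> C -> A) (q : prime_idx) (x y : Defs.pcomp C (val q)) : Bw c ->
  val (fmap c q x y) = cp c (val q) (val x) (val y).
Proof.
move=> hB; rewrite /fmap insubdK //; apply: cp_primary => //; [exact: valP | exact: valP | exact: valP].
Qed.

Lemma fmap_Bw (C A : zmodType) (c : C -> C -> A) : Bw c -> prodBw (fmap c).
Proof.
move=> hB q; apply: (LBwq (g := cp c (val q))).
- by move=> x y; rewrite val_fmap.
- exact: (cp_cocycle _ (proj1 (BwP hB))).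
move=> s hs; pose S := map val s.
have hS : fin_subgroup S.
  split; first by apply/mapP; exists 0 => //; exact: fs0.
  move=> x y /mapP [x' hx' ->] /mapP [y' hy' ->]; apply/mapP; exists (x' - y') => //.
  exact: fsB.
have hSp : forall w, w \in S -> w \in primary (val q).
  by move=> w /mapP [w' _ ->]; exact: valP.
case: (proj2 (BwP hB) S hS) => phi hphi.
have pq : prime (val q) by exact: valP.
exists (fun z => phi z + psi c (val q) z); split.
  move=> z zs; apply: (key hB pq hS hSp hphi); exact: map_f.
move=> x y xs ys; rewrite /cp hphi ?map_f // delta_add //.
Qed.

Lemma Bw_add (C A : zmodType) (c d : C -> C -> A) : Bw c -> Bw d -> Bw (add1 c d).
Proof.
move=> /BwP [hc wc] /BwP [hd wd]; split; first exact: cocycle_add.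
move=> s hs; case: (wc s hs) => phi hphi; case: (wd s hs) => chi hchi.
exists (fun z => phi z + chi z) => x y xs ys.
by rewrite /add1 hphi // hchi // delta_add.
Qed.

Lemma Tsum_add (C A : zmodType) (c d : C -> C -> A) p z :
  Tsum (add1 c d) p z = Tsum c p z + Tsum d p z.
Proof. by rewrite /Tsum -big_split. Qed.

Lemma Tsum_sub (C A : zmodType) (c d : C -> C -> A) p z :
  Tsum (sub1 c d) p z = Tsum c p z - Tsum d p z.
Proof. by rewrite /Tsum -sumrB. Qed.

Lemma fmap_hom (C A : zmodType) (c d : C -> C -> A) : Bw c -> Bw d ->
  prodBc (subP (fmap (add1 c d)) (addP (fmap c) (fmap d))).
Proof.
move=> hc hd q; have hcd := Bw_add hc hd; have pq : prime (val q) by exact: valP.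
apply: (LBcq (chi := fun z => psi (add1 c d) (val q) z - psi c (val q) z - psi d (val q) z)).
- move=> z; have hz : val z \in primary (val q) by exact: valP.
  apply/primaryP; exists (kq (val q) (val z)); rewrite -/(nq _ _) !mulrnBl.
  have h1 := psi_spec hcd pq hz; have h2 := psi_spec hc pq hz; have h3 := psi_spec hd pq hz.
  rewrite Tsum_add in h1.
  move/eqP: h1; rewrite addr_eq0 => /eqP ->.
  move/eqP: h2; rewrite addr_eq0 => /eqP ->.
  move/eqP: h3; rewrite addr_eq0 => /eqP ->.
  by zprep; rewrite subr0 (ACl ((1*3)*(2*4))) /=; zfin.
- by rewrite !psi0 subrr subr0.
move=> x y; rewrite /subP /addP /= !val_fmap // /cp /add1.
by zprep; rewrite (ACl ((1*6)*(2*10)*(3*14)*(4*17)*(5*20)*(7*15)*(8*18)*(9*21)*(11*16)*(12*19)*(13*22))) /=; zfin.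
Qed.

Lemma fmap_wd (C A : zmodType) (c d : C -> C -> A) : Bw c -> Bw d -> Bc (sub1 c d) ->
  prodBc (subP (fmap c) (fmap d)).
Proof.
move=> hc hd [hcd [phi hphi]] q; have pq : prime (val q) by exact: valP.
have phi0 : phi 0 = 0.
  have := hphi 0 0; rewrite /sub1 (cocycle_0r (proj1 (BwP hc))) (cocycle_0r (proj1 (BwP hd))).
  by rewrite subrr add0r subrr add0r => <-.
apply: (LBcq (chi := fun z => phi z + psi c (val q) z - psi d (val q) z)).
- move=> z; have hz : val z \in primary (val q) by exact: valP.
  apply/primaryP; exists (kq (val q) (val z)); rewrite -/(nq _ _) !mulrnBl mulrnDl.
  have h2 := psi_spec hc pq hz; have h3 := psi_spec hd pq hz.
  move/eqP: h2; rewrite addr_eq0 => /eqP ->.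
  move/eqP: h3; rewrite addr_eq0 => /eqP ->.
  have hT : Tsum c (val q) (val z) - Tsum d (val q) (val z) = phi (val z) *+ nq (val q) (val z).
    rewrite -Tsum_sub /Tsum (tel (phi := phi)); last by move=> i _; rewrite hphi.
    by rewrite (nqP hz) phi0 subr0 addr0.
  by rewrite -hT; zprep; rewrite subr0 (ACl ((1*3)*(2*4))) /=; zfin.
- by rewrite phi0 !psi0 addr0 subrr.
move=> x y; rewrite /subP /= !val_fmap // /cp.
have -> : c (val x) (val y) = d (val x) (val y) + (phi (val y) - phi (val x + val y) + phi (val x)).
  by rewrite -hphi /sub1 addrC subrK.
by zprep; rewrite (ACl ((1*8)*(2*12)*(3*15)*(4*18)*(5*13)*(6*16)*(7*19)*(9*14)*(10*17)*(11*20))) /=; zfin.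
Qed.

Lemma quad_sub (V : zmodType) (a b c e a' b' c' e' : V) :
  (a - a') - (b - b') + (c - c') - (e - e') = (a - b + c - e) - (a' - b' + c' - e').
Proof. by zprep; rewrite (ACl ((1*9)*(2*13)*(3*10)*(4*14)*(5*11)*(6*15)*(7*12)*(8*16))) /=; zfin. Qed.

Lemma cocycle_sub (C A : zmodType) (c d : C -> C -> A) :
  cocycle c -> cocycle d -> cocycle (sub1 c d).
Proof.
move=> [c0 cs cc] [d0 ds dc]; split.
- by move=> x; rewrite /sub1 c0 d0 subr0.
- by move=> x y; rewrite /sub1 cs ds.
- by move=> x y z; rewrite /sub1 quad_sub cc dc subr0.
Qed.

Lemma fmap_inj (C A : zmodType) (HC : torsion C) (c d : C -> C -> A) :
  Bw c -> Bw d -> prodBc (subP (fmap c) (fmap d)) -> Bc (sub1 c d).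
Proof.
move=> hc hd H.
have he := cocycle_sub (proj1 (BwP hc)) (proj1 (BwP hd)).
have hchi : forall p, exists chi : C -> A, prime p -> forall x y,
    x \in primary p -> y \in primary p -> sub1 c d x y = chi y - chi (x + y) + chi x.
  move=> p; case: (boolP (prime p)) => pp; last by exists (fun _ => 0).
  pose q : prime_idx := exist _ p pp.
  case: (H q) => _ [phi hphi].
  exists (fun u => val (phi (insubd 0 u)) - psi c p u + psi d p u) => _ x y hx hy.
  have hxy : (insubd 0 x : Defs.pcomp C (val q)) + insubd 0 y = insubd 0 (x + y).
    by apply: val_inj; rewrite /= !insubdK // rpredD.
  have := congr1 val (hphi (insubd 0 x) (insubd 0 y)).
  have e1 := @val_fmap C A c q (insubd 0 x) (insubd 0 y) hc.
  have e2 := @val_fmap C A d q (insubd 0 x) (insubd 0 y) hd.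
  have vB : forall u v : Defs.pcomp A (val q), val (u - v) = val u - val v by [].
  rewrite /subP vB e1 e2 hxy !insubdK ?rpredD // /cp => h.
  have vD : forall u v : Defs.pcomp A (val q), val (u + v) = val u + val v by [].
  rewrite vD vB in h; change (val q) with p in h.
  move: h; set a := val (phi (insubd 0 y)); set b := val (phi (insubd 0 (x + y))).
  set e := val (phi (insubd 0 x)) => h.
  have ha : a = (a - b + e) + b - e.
    by zprep; rewrite (ACl ((1*2)*(3*5)*(4*6))) /=; zfin.
  by rewrite ha -h /sub1; zprep; rewrite (ACl ((1*3)*(2*7)*(4*13)*(5*16)*(6*19)*(8*14)*(9*17)*(10*20)*(11*15)*(12*18))) /=; zfin.
case: (choice hchi) => chi hchi'.
case: (glue HC he (chi := chi)) => [p pp x y hx hy|phi hphi]; first exact: hchi'.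
by split => //; exists phi.
Qed.


Definition pi (C : zmodType) (q : prime_idx) (x : C) : Defs.pcomp C (val q) :=
  insubd 0 (piv (val q) x).
Arguments pi {C} q x.

Lemma val_pi (C : zmodType) (HC : torsion C) q (x : C) : val (pi q x) = piv (val q) x.
Proof. by rewrite /pi insubdK //; apply: piv_primary => //; exact: valP. Qed.

Lemma pi_add (C : zmodType) (HC : torsion C) q (x y : C) : pi q (x + y) = pi q x + pi q y.
Proof. by apply: val_inj; rewrite /= !val_pi // piv_add //; exact: valP. Qed.

Lemma pi0 (C : zmodType) (HC : torsion C) q : pi q (0 : C) = 0.
Proof. by apply: val_inj; rewrite val_pi // piv0 //; exact: valP. Qed.

Lemma pi_id (C : zmodType) (HC : torsion C) q (x : Defs.pcomp C (val q)) : pi q (val x) = x.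
Proof. by apply: val_inj; rewrite val_pi // piv_id //; exact: valP. Qed.

Lemma pi_big (C : zmodType) (HC : torsion C) q (x : C) : (nb x < val q)%N -> pi q x = 0.
Proof.
move=> h; apply: val_inj; rewrite val_pi //=.
by apply: (piv_big HC (valP q) (proj1 (nbP HC x)) (proj2 (nbP HC x))).
Qed.

Lemma pi_other (C : zmodType) (HC : torsion C) q r (x : C) : val q != r -> prime r ->
  x \in primary r -> pi q x = 0.
Proof.
move=> hne pr hx; apply: val_inj; rewrite val_pi //=.
exact: (piv_other HC (valP q) pr hne hx).
Qed.

Definition gF (C A : zmodType) (F : prodspace C A) (x y : C) (p : nat) : A :=
  match (insub p : option prime_idx) with
  | Some q => val (F q (pi q x) (pi q y))
  | None => 0
  end.

Definition cF (C A : zmodType) (F : prodspace C A) (x y : C) : A :=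
  \sum_(0 <= p < (nb x + nb y).+1) gF F x y p.

Lemma prodBw_coc (C A : zmodType) (F : prodspace C A) q : prodBw F -> cocycle (F q).
Proof. by move=> hF; case: (hF q). Qed.

Lemma gF_big (C A : zmodType) (HC : torsion C) (F : prodspace C A) (x y : C) p :
  prodBw F -> (nb x < p)%N || (nb y < p)%N -> gF F x y p = 0.
Proof.
move=> hF h; rewrite /gF; case: insubP => [q _ hq|] //.
case/orP: h => h.
  by rewrite pi_big ?hq // (cocycle_0l (prodBw_coc q hF)).
by rewrite (pi_big HC (x := y)) ?hq // (cocycle_0r (prodBw_coc q hF)).
Qed.

Lemma cF_stab (C A : zmodType) (HC : torsion C) (F : prodspace C A) (x y : C) M :
  prodBw F -> ((nb x + nb y).+1 <= M)%N -> cF F x y = \sum_(0 <= p < M) gF F x y p.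
Proof.
move=> hF hM; rewrite /cF [RHS](sum_stab (m := (nb x + nb y).+1)) // => p hp.
apply: gF_big => //; apply/orP; left; lia.
Qed.

Lemma cF_cocycle (C A : zmodType) (HC : torsion C) (F : prodspace C A) :
  prodBw F -> cocycle (cF F).
Proof.
move=> hF; split.
- move=> x; rewrite /cF big1 // => p _; rewrite /gF; case: insubP => [q _ _|_] //.
  by rewrite pi0 // (cocycle_0r (prodBw_coc q hF)).
- move=> x y; rewrite /cF addnC; apply: eq_bigr => p _; rewrite /gF.
  by case: insubP => [q _ _|_] //; rewrite (cocycle_sym (prodBw_coc q hF)).
move=> x y z; pose M := (nb x + nb y + nb z + nb (x + y) + nb (y + z)).+1.
rewrite !(cF_stab HC (M := M)) //; try (rewrite /M; lia).
rewrite -sumrB -big_split -sumrB big1 // => p _ /=; rewrite /gF.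
case: insubP => [q _ _|_]; last by rewrite /= !(subrr, addr0, add0r).
case: (prodBw_coc q hF) => _ _ hc.
rewrite !pi_add //.
have := congr1 val (hc (pi q x) (pi q y) (pi q z)).
by [].
Qed.

Lemma pi_sub (C : zmodType) (HC : torsion C) q (x y : C) : pi q (x - y) = pi q x - pi q y.
Proof. by apply/eqP; rewrite eq_sym subr_eq -pi_add // subrK. Qed.

Lemma cF_Bw (C A : zmodType) (HC : torsion C) (F : prodspace C A) :
  prodBw F -> Bw (cF F).
Proof.
move=> hF; split; first exact: cF_cocycle.
move=> s hs.
have hq : forall q : prime_idx, exists chi : C -> A,
    (forall x, x \in s -> pi q x = 0 -> chi x = 0) /\
    forall x y, x \in s -> y \in s ->
      val (F q (pi q x) (pi q y)) = chi y - chi (x + y) + chi x.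
  move=> q; pose sq := map (pi q) s.
  have hsq : fin_subgroup sq.
    split; first by rewrite -(pi0 HC q); apply: map_f; exact: fs0.
    move=> u v /mapP [x' hx' ->] /mapP [y' hy' ->]; rewrite -pi_sub //.
    by apply: map_f; exact: fsB.
  case: (hF q) => hcq hw; case: (hw sq hsq) => phi hphi.
  have phi0 := bw_phi0 hcq hsq hphi.
  exists (fun u => val (phi (pi q u))); split.
    by move=> x _ ->; rewrite phi0.
  move=> x y xs ys; rewrite hphi ?map_f // -pi_add //.
case: (choice hq) => chi hchi.
pose hc (x : C) (p : nat) : A :=
  match (insub p : option prime_idx) with Some q => chi q x | None => 0 end.
pose Ms := (\max_(x <- s) nb x).+1.
exists (fun x => \sum_(0 <= p < Ms) hc x p) => x y xs ys.
pose M := (Ms + nb x + nb y).+1.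
have hstab : forall u, u \in s -> \sum_(0 <= p < Ms) hc u p = \sum_(0 <= p < M) hc u p.
  move=> u us; rewrite [RHS](sum_stab (m := Ms)) //; first by rewrite /M; lia.
  move=> p hp; rewrite /hc; case: insubP => [q _ hqp|] //.
  apply: (proj1 (hchi q)) => //; apply: pi_big => //; rewrite hqp.
  have := @leq_bigmax_seq _ s (fun _ => true) (@nb C) u us isT; move: hp; rewrite /Ms => h1 h2; exact: (leq_ltn_trans h2 h1).
rewrite (@cF_stab C A HC F x y M hF); last by rewrite /M; lia.
rewrite !hstab //; last exact: fsD.
rewrite -sumrB -big_split /=; apply: eq_bigr => p _; rewrite /gF /hc.
case: insubP => [q _ _|_]; first exact: (proj2 (hchi q)).
by rewrite !(subrr, addr0).
Qed.

Lemma cF_on (C A : zmodType) (HC : torsion C) (F : prodspace C A) (q : prime_idx)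
  (x y : Defs.pcomp C (val q)) : prodBw F -> cF F (val x) (val y) = val (F q x y).
Proof.
move=> hF; have pq : prime (val q) by exact: valP.
pose M := (nb (val x) + nb (val y) + val q).+1.
rewrite (@cF_stab C A HC F (val x) (val y) M hF); last by rewrite /M; lia.
rewrite (eq_bigr (fun r => if r == val q then val (F q x y) else 0)).
  by rewrite sum_single; have -> : (val q < M)%N by rewrite /M; lia.
move=> r _; rewrite /gF; case: insubP => [q' pr hq'|npr].
  case: (eqVneq r (val q)) => [hr|hr].
    have -> : q' = q by apply: val_inj; rewrite hq' hr.
    by rewrite !pi_id.
  have hne : val q' != val q by rewrite hq'.
  by rewrite (pi_other HC hne pq (valP x)) (cocycle_0l (prodBw_coc q' hF)).
case: (eqVneq r (val q)) => // hrq.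
by move: npr; rewrite hrq (valP q).
Qed.

Lemma fmap_surj (C A : zmodType) (HC : torsion C) (F : prodspace C A) :
  prodBw F -> exists2 c, Bw c & prodBc (subP F (fmap c)).
Proof.
move=> hF; have hB := cF_Bw HC hF; exists (cF F) => // q.
have pq : prime (val q) by exact: valP.
apply: (LBcq (chi := fun z => - psi (cF F) (val q) z)).
- move=> z; have hz : val z \in primary (val q) by exact: valP.
  rewrite rpredN; apply: (@primary_mul _ _ (kq (val q) (val z))); rewrite -/(nq _ _).
  have := psi_spec hB pq hz; move/eqP; rewrite addr_eq0 => /eqP ->.
  rewrite rpredN /Tsum; apply: rpred_sum => i _.
  have -> : val z *+ i = val (z *+ i) by rewrite raddfMn.
  by rewrite cF_on //; exact: valP.
- by rewrite psi0 oppr0.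
move=> x y.
have vB : forall u v : Defs.pcomp A (val q), val (u - v) = val u - val v by [].
rewrite /subP vB val_fmap // /cp cF_on //.
by zprep; rewrite (ACl ((1*2)*(3*6)*(4*7)*(5*8))) /=; zfin.
Qed.

Lemma gsT (T : Type) (G : set (set T)) : <<s G >> setT.
Proof. by have := sigma_algebraCD (@sigma_algebra0 _ setT G); rewrite setD0. Qed.

Lemma gsU (T : Type) (G : set (set T)) (X Y : set T) :
  <<s G >> X -> <<s G >> Y -> <<s G >> (X `|` Y).
Proof.
move=> hX hY.
have -> : X `|` Y = \bigcup_i (if i == 0%N then X else if i == 1%N then Y else set0).
  apply/seteqP; split => t.
    by case => h; [exists 0%N | exists 1%N].
  by case=> i _; case: ifP => _ h; [left | case: ifP h => // _ h; right].
by apply: sigma_algebra_bigcup => i; case: ifP => _ //; case: ifP => _ //; exact: sigma_algebra0.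
Qed.

Lemma gsI (T : Type) (G : set (set T)) (X Y : set T) :
  <<s G >> X -> <<s G >> Y -> <<s G >> (X `&` Y).
Proof.
move=> hX hY.
have -> : X `&` Y = setT `\` ((setT `\` X) `|` (setT `\` Y)).
  apply/seteqP; split => t.
    by case=> hx hy; split => // -[[_ ]|[_]].
  case=> _ h; split; apply: contrapT => hn; apply: h; by [left | right].
by apply: sigma_algebraCD; apply: gsU; apply: sigma_algebraCD.
Qed.

Definition fdet (C : eqType) (A : Type) (Phi : (C -> C -> A) -> A) : Prop :=
  exists L : seq (C * C), forall c d : C -> C -> A,
    (forall uv, uv \in L -> c uv.1 uv.2 = d uv.1 uv.2) -> Phi c = Phi d.

Lemma fdet_ext (C : eqType) (A : Type) (Phi Psi : (C -> C -> A) -> A) :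
  (forall c, Phi c = Psi c) -> fdet Psi -> fdet Phi.
Proof. by move=> h [L hL]; exists L => c d hcd; rewrite !h; apply: hL. Qed.

Lemma fdet_coord (C : eqType) (A : Type) (u v : C) : fdet (fun c : C -> C -> A => c u v).
Proof. by exists [:: (u, v)] => c d h; apply: (h (u, v)); rewrite inE. Qed.

Lemma fdet_const (C : eqType) (A : Type) (a : A) : fdet (fun c : C -> C -> A => a).
Proof. by exists [::]. Qed.

Lemma fdet_app (C : eqType) (A B : Type) (G : A -> A) (Phi : (C -> C -> A) -> A) :
  fdet Phi -> fdet (fun c => G (Phi c)).
Proof. by move=> [L hL]; exists L => c d h; rewrite (hL c d h). Qed.

Lemma fdet_op2 (C : eqType) (A : Type) (op : A -> A -> A) (Phi Psi : (C -> C -> A) -> A) :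
  fdet Phi -> fdet Psi -> fdet (fun c => op (Phi c) (Psi c)).
Proof.
move=> [L1 h1] [L2 h2]; exists (L1 ++ L2) => c d h.
rewrite (h1 c d) ?(h2 c d) // => uv huv; apply: h; by rewrite mem_cat huv ?orbT.
Qed.

Lemma fdet_sum (C : eqType) (A : zmodType) (Phi : nat -> (C -> C -> A) -> A) n :
  (forall i, fdet (Phi i)) -> fdet (fun c => \sum_(0 <= i < n) Phi i c).
Proof.
move=> h; elim: n => [|n IH].
  by apply: (fdet_ext (Psi := fun _ => 0)) => [c|]; [rewrite big_geq | exact: fdet_const].
apply: (fdet_ext (Psi := fun c => \sum_(0 <= i < n) Phi i c + Phi n c)).
  by move=> c; rewrite big_nat_recr.
exact: (fdet_op2 +%R IH (h n)).
Qed.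

Lemma meas_fdet (C : eqType) (A : countType) (Phi : (C -> C -> A) -> A) (a : A) :
  fdet Phi -> borel1 [set c | Phi c = a].
Proof.
move=> [L hL].
pose S (v : seq A) := [set c : C -> C -> A | map (fun uv => c uv.1 uv.2) L = v].
have hS0 : forall (L0 : seq (C * C)) v,
    borel1 [set c : C -> C -> A | map (fun uv => c uv.1 uv.2) L0 = v].
  elim=> [|uv L0 IH] v /=.
    case: v => [|b v].
      have -> : [set c : C -> C -> A | [::] = [::] :> seq A] = setT by apply/seteqP; split.
      exact: gsT.
    have -> : [set c : C -> C -> A | [::] = b :: v] = set0 by apply/seteqP; split.
    exact: sigma_algebra0.
  case: v => [|b v].
    have -> : [set c : C -> C -> A | c uv.1 uv.2 :: map (fun uv => c uv.1 uv.2) L0 = [::]] = set0.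
      by apply/seteqP; split.
    exact: sigma_algebra0.
  have -> : [set c : C -> C -> A | c uv.1 uv.2 :: map (fun uv => c uv.1 uv.2) L0 = b :: v] =
      [set c | c uv.1 uv.2 = b] `&` [set c | map (fun uv => c uv.1 uv.2) L0 = v].
    apply/seteqP; split => c /=; first by case=> -> ->.
    by case=> -> ->.
  apply: gsI; last exact: IH.
  by apply: sub_sigma_algebra; exists uv.1, uv.2, b.
have hS : forall v, borel1 (S v) by move=> v; exact: hS0.
pose T (n : nat) : set (C -> C -> A) :=
  match (unpickle n : option (seq A)) with
  | Some v => if `[< exists c0, map (fun uv => c0 uv.1 uv.2) L = v /\ Phi c0 = a >] then S v else set0
  | None => set0
  end.
have -> : [set c | Phi c = a] = \bigcup_n T n.
  apply/seteqP; split => c /=.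
    move=> hc; exists (pickle (map (fun uv => c uv.1 uv.2) L)) => //.
    rewrite /T pickleK; case: ifPn => [_|/asboolPn]; first by [].
    by case; exists c.
  case=> n _; rewrite /T; case: (unpickle n) => [v|] //.
  case: ifPn => [/asboolP [c0 [hc0 hPhi]]|] // hc.
  rewrite -hPhi; apply: hL => uv huv.
  move: hc; rewrite /S /= -hc0 => /eq_in_map h; exact: h.
apply: sigma_algebra_bigcup => n; rewrite /T.
case: (unpickle n) => [v|]; last exact: sigma_algebra0.
by case: ifP => _; [exact: hS | exact: sigma_algebra0].
Qed.

Lemma fdet_Tsum (C A : zmodType) p (z : C) : fdet (fun c : C -> C -> A => Tsum c p z).
Proof.
apply: (fdet_ext (Psi := fun c => \sum_(0 <= i < nq p z) (fun i (c : C -> C -> A) => c (z *+ i) z) i c)) => //.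
by apply: fdet_sum => i; exact: fdet_coord.
Qed.

Lemma fdet_psi (C A : zmodType) p (z : C) : fdet (fun c : C -> C -> A => psi c p z).
Proof.
case: (eqVneq z 0) => [->|hz].
  by apply: (fdet_ext (Psi := fun _ => 0)) => [c|]; [rewrite psi0 | exact: fdet_const].
apply: (fdet_ext (Psi := fun c => Gdiv p z (Tsum c p z))) => [c|].
  by rewrite /psi (negbTE hz).
exact: (fdet_app A (Gdiv p z) (fdet_Tsum A p z)).
Qed.

Lemma fdet_cp (C A : zmodType) p (u v : C) : fdet (fun c : C -> C -> A => cp c p u v).
Proof.
rewrite /cp; apply: (@fdet_op2 C A (@GRing.add A) (fun c => c u v)); first exact: fdet_coord.
apply: (@fdet_op2 C A (@GRing.add A) (fun c => psi c p v - psi c p (u + v))); last exact: fdet_psi.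
apply: (@fdet_op2 C A (fun a b => a - b) (fun c => psi c p v)); exact: fdet_psi.
Qed.

Lemma borel_pull (C A : zmodType) (f : (C -> C -> A) -> prodspace C A) (G : set (C -> C -> A)) :
  (forall q x y a, exists B', borel1 B' /\
     G `&` f @^-1` [set F | F q x y = a] = G `&` B') ->
  forall B, borelP B -> exists B', borel1 B' /\ G `&` f @^-1` B = G `&` B'.
Proof.
move=> hcyl.
pose D := [set B | exists B', borel1 B' /\ G `&` f @^-1` B = G `&` B'].
have ptw : forall B B', G `&` f @^-1` B = G `&` B' -> forall c, G c -> (B (f c) <-> B' c).
  move=> B B' E c hc; split => h.
    have : (G `&` B') c by rewrite -E; split.
    by case.
  have : (G `&` f @^-1` B) c by rewrite E; split.
  by case.
suff : <<s @cylP C A >> `<=` D by move=> h B /h.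
apply: smallest_sub; last first.
  by move=> B [q [x [y [a ->]]]]; exact: hcyl.
split.
- exists set0; split; first exact: sigma_algebra0.
  by apply/seteqP; split => c [].
- move=> B [B' [mB' E]]; exists (setT `\` B'); split; first exact: sigma_algebraCD.
  apply/seteqP; split => c [hc [_ h]]; split => //; split => // h'; apply: h.
    by apply/(ptw _ _ E c hc).
  by apply/(ptw _ _ E c hc).
- move=> Bn hBn; case: (choice hBn) => Bn' hBn'.
  exists (\bigcup_n Bn' n); split.
    by apply: sigma_algebra_bigcup => n; case: (hBn' n).
  apply/seteqP; split => c [hc [n _ h]]; split => //; exists n => //.
    by apply/(ptw _ _ (proj2 (hBn' n)) c hc).
  by apply/(ptw _ _ (proj2 (hBn' n)) c hc).
Qed.

Lemma main_aux (C A : countZmodType) (HC : torsion C) :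
  borel_def_iso (@add1 C A) (@sub1 C A) (@addP C A) (@subP C A)
    (@borel1 C A) (@borelP C A)
    (@Bw C A) (@Bc C A) (@prodBw C A) (@prodBc C A).
Proof.
exists (@fmap C A); split.
- by move=> c hc; exact: fmap_Bw.
- apply: borel_pull => q x y a.
  exists [set c : C -> C -> A | cp c (val q) (val x) (val y) = val a]; split.
    exact: (meas_fdet (val a) (fdet_cp _ _ _ _)).
  apply/seteqP; split => c [hc h]; split => //=.
    by rewrite -val_fmap // h.
  by apply: val_inj; rewrite val_fmap.
- by move=> c d hc hd; exact: fmap_wd.
- by move=> c d hc hd; exact: fmap_hom.
split.
- by move=> c d hc hd; exact: fmap_inj.
- by move=> F hF; exact: fmap_surj.
Qed.

Unset Implicit Arguments.

Theorem lemma4p6 (C A : countZmodType) (HC : torsion C) :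
  borel_def_iso (@add1 C A) (@sub1 C A) (@addP C A) (@subP C A)
    (@borel1 C A) (@borelP C A)
    (@Bw C A) (@Bc C A) (@prodBw C A) (@prodBc C A).
Proof. exact: main_aux. Qed.
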